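(* Let $n,d,c\in\mathbb{N}$ with $d\ge 50$ and $c\in[d]$, let $\mathcal{F}\subseteq 2^{[n]}$ be a hereditary family with $\delta(\mathcal{F})\ge 2^{d-1}-c+1$, and let $P$ be an isolated pile of $\mathcal{F}$ with $\sum_{x\in P}\omega_{\mathcal{F}}(x)<2^d-c$. Then: (a) $t\ge c$; (b) $t\le 2c-2$; (c) for every $x\in P$, $d_{\mathcal{G}}(x)\ge 2^{d-1}-2c+2$; (d) if $x\in P$ is a bad vertex, then $\{x\}\in\mathcal{N}$; (e) $P$ contains at most $\frac d2-1$ good vertices.
   Context: A family is hereditary if it is closed under taking subsets. $d_{\mathcal{F}}(x)=|\{F\in\mathcal{F}:x\in F\}|$, $\delta(\mathcal{F})=\min_x d_{\mathcal{F}}(x)$, $N(x)=\bigcup_{x\in F\in\mathcal{F}}F$. The weight of $x$ is $\omega_{\mathcal{F}}(x)=\sum_{x\in F\in\mathcal{F}}\frac{1}{|F|}$. A vertex $x$ is good if $|N(x)|\ge d+1$ and bad if $|N(x)|=d$. A set $P\subseteq[n]$ with $|P|=d$ is a pile of $\mathcal{F}$ if $P\subseteq N(y)$ for every $y\in P$, and there exists $z\in P$ with $N(z)=P$; a pile is isolated if it is disjoint from every other pile. Given the pile $P$, let $\mathcal{G}=\{S\subseteq P: S\in\mathcal{F}\}$, $d_{\mathcal{G}}(x)=|\{S\in\mathcal{G}:x\in S\}|$, $t=2^d-|\mathcal{G}|$, $\mathcal{M}=2^{P}\setminus\mathcal{G}$, and $\mathcal{N}=\{P\setminus M: M\in\mathcal{M}\}$.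 *)

(* Defs.v *)
From mathcomp Require Import all_boot all_order all_algebra.
Set Implicit Arguments. Unset Strict Implicit. Unset Printing Implicit Defensive.
Import Order.TTheory GRing.Theory Num.Theory.

Section Defs.
Variable n : nat.
Implicit Types (F G : {set {set 'I_n}}) (P S : {set 'I_n}) (x : 'I_n).

Definition hereditary F : Prop :=
  forall A B : {set 'I_n}, A \in F -> B \subset A -> B \in F.

Definition degF F x : nat := #|[set S in F | x \in S]|.

Definition min_deg_ge F (k : nat) : Prop := forall x, k <= degF F x.

Definition nbhd F x : {set 'I_n} := \bigcup_(S in F | x \in S) S.

Definition weightF F x : rat := \sum_(S in F | x \in S) (#|S|%:R)^-1.

Definition good_v F (d : nat) x : bool := d.+1 <= #|nbhd F x|.
Definition bad_v F (d : nat) x : bool := #|nbhd F x| == d.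

Definition pileF F (d : nat) P : Prop :=
  #|P| = d /\ (forall y, y \in P -> P \subset nbhd F y) /\
  (exists2 z, z \in P & nbhd F z = P).

Definition isolated_pile F d P : Prop :=
  pileF F d P /\ (forall Q, pileF F d Q -> Q != P -> [disjoint P & Q]).

(* G = {S subset P : S in F} *)
Definition subfam F P : {set {set 'I_n}} := [set S in F | S \subset P].
(* t = 2^d - |G| *)
Definition t_of F (d : nat) P : nat := 2 ^ d - #|subfam F P|.
(* M = 2^P \ G *)
Definition missing_fam F P : {set {set 'I_n}} := powerset P :\: subfam F P.
(* N = {P \ M : M in M} *)
Definition compl_missing F P : {set {set 'I_n}} :=
  [set P :\: M | M in missing_fam F P].
End Defs.

(* Main.v *)
Require Import Defs.
From mathcomp Require Import all_boot all_order all_algebra zify.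
Set Implicit Arguments. Unset Strict Implicit. Unset Printing Implicit Defensive.
Import Order.TTheory GRing.Theory Num.Theory.
Lemma interval_card (T : finType) (A B : {set T}) : A \subset B ->
  #|[set R : {set T} | (A \subset R) && (R \subset B)]| = 2 ^ (#|B| - #|A|).
Proof.
move=> sAB.
have -> : [set R : {set T} | (A \subset R) && (R \subset B)] =
          [set R :|: A | R in powerset (B :\: A)].
  apply/setP => R; rewrite inE; apply/andP/imsetP.
  - move=> [sAR sRB]; exists (R :\: A); first by rewrite powersetE setSD.
    apply/setP=> x; rewrite !inE; case: (boolP (x \in A)) => xA; last by rewrite orbF.
    by rewrite (subsetP sAR).
  - move=> [R' HR' ->]; rewrite powersetE in HR'; split; first exact: subsetUr.
    rewrite subUset sAB andbT; exact: subset_trans HR' (subsetDl _ _).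
rewrite card_in_imset ?card_powerset.
  by rewrite cardsD (setIidPr sAB).
move=> R1 R2; rewrite !powersetE => H1 H2 E.
apply/setP=> x; case: (boolP (x \in A)) => xA.
  have /negbTE -> : x \notin R1 by apply/negP => /(subsetP H1); rewrite inE xA.
  have /negbTE -> : x \notin R2 by apply/negP => /(subsetP H2); rewrite inE xA.
  by [].
by move/setP: E => /(_ x); rewrite !inE (negbTE xA) !orbF.
Qed.

Lemma exists_mid (T : finType) (A S : {set T}) k :
  A \subset S -> #|A| <= k <= #|S| ->
  exists R : {set T}, [/\ A \subset R, R \subset S & #|R| = k].
Proof.
move=> sAS /andP[hA hS].
move: {2}#|S| (leqnn #|S|) => m; elim: m S sAS hS => [|m IH] S sAS hS hm.
  exists S; split; [done | exact: subxx | lia].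
case: (ltngtP k #|S|) => h; last first.
- by exists S; split => //; exact: subxx.
- lia.
have : ~~ (S \subset A).
  apply/negP => sSA; have := subset_leq_card sSA; lia.
case/subsetPn => a aS aA.
have sAS' : A \subset S :\ a.
  apply/subsetP => x xA; rewrite !inE (subsetP sAS) // andbT.
  by apply: contraNN aA => /eqP <-.
have hc := cardsD1 a S; rewrite aS /= in hc.
have [R [H1 H2 H3]] := IH (S :\ a) sAS' ltac:(lia) ltac:(lia).
exists R; split => //; apply: subset_trans H2 _; exact: subsetDl.
Qed.

Definition Ox n (F : {set {set 'I_n}}) (P : {set 'I_n}) x :=
  [set S in F | x \in S] :\: powerset P.
Definition mx n (F : {set {set 'I_n}}) (P : {set 'I_n}) x :=
  #|[set M in missing_fam F P | x \in M]|.
Definition ex n (F : {set {set 'I_n}}) (P : {set 'I_n}) x : rat :=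
  (\sum_(S in Ox F P x) (#|S|%:R)^-1)%R.

Lemma subfam_sub n (F : {set {set 'I_n}}) (P : {set 'I_n}) : subfam F P \subset powerset P.
Proof. by apply/subsetP => S; rewrite !inE ?powersetE => /andP[]. Qed.

Lemma miss_card n (F : {set {set 'I_n}}) (P : {set 'I_n}) d : #|P| = d ->
  #|missing_fam F P| = t_of F d P.
Proof.
move=> hP; rewrite /missing_fam /t_of cardsD card_powerset hP.
by rewrite (setIidPr (subfam_sub F P)).
Qed.

Lemma subfam_le n (F : {set {set 'I_n}}) (P : {set 'I_n}) : #|subfam F P| <= 2 ^ #|P|.
Proof. by rewrite -card_powerset subset_leq_card // subfam_sub. Qed.

Lemma count_x n (F : {set {set 'I_n}}) (P : {set 'I_n}) x : x \in P ->
  degF (subfam F P) x + mx F P x = 2 ^ (#|P| - 1).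
Proof.
move=> xP.
have sxP : [set x] \subset P by rewrite sub1set.
have := interval_card sxP; rewrite cards1 => <-.
set Px := [set R : {set 'I_n} | _].
have E1 : [set S in subfam F P | x \in S] = Px :&: F.
  apply/setP => S; rewrite !inE sub1set ?powersetE;
  by case: (S \in F); case: (x \in S); case: (S \subset P).
have E2 : [set M in missing_fam F P | x \in M] = Px :\: F.
  apply/setP => S; rewrite !inE sub1set ?powersetE;
  by case: (S \in F); case: (x \in S); case: (S \subset P).
by rewrite /degF /mx E1 E2 cardsID.
Qed.

Lemma deg_split n (F : {set {set 'I_n}}) (P : {set 'I_n}) x :
  degF F x = degF (subfam F P) x + #|Ox F P x|.
Proof.
have E : [set S in subfam F P | x \in S] = [set S in F | x \in S] :&: powerset P.
  apply/setP => S; rewrite !inE ?powersetE; by case: (S \in F); case: (x \in S); case: (S \subset P).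
by rewrite /degF /Ox E cardsID.
Qed.

Lemma upclosed n (F : {set {set 'I_n}}) (P : {set 'I_n}) (M M' : {set 'I_n}) : hereditary F ->
  M \in missing_fam F P -> M \subset M' -> M' \subset P -> M' \in missing_fam F P.
Proof.
move=> hF; rewrite !inE ?powersetE => /andP[hM sMP] sMM' sM'P.
rewrite sM'P andbT andbT; apply/negP => HM'.
move: hM; rewrite sMP andbT => /negP; apply; exact: hF _ _ HM' sMM'.
Qed.

Lemma Ox_nb n (F : {set {set 'I_n}}) (P : {set 'I_n}) z : nbhd F z = P -> Ox F P z = set0.
Proof.
move=> hz; apply/setP => S; rewrite !inE ?powersetE -hz.
case hS: (S \in F); case zS: (z \in S); rewrite ?andbF //= andbT.
by rewrite /nbhd (bigcup_sup S) ?hS ?zS.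
Qed.

Lemma t2m n (F : {set {set 'I_n}}) (P : {set 'I_n}) z : hereditary F -> z \in P ->
  #|missing_fam F P| <= 2 * mx F P z.
Proof.
move=> hF zP.
rewrite -(cardsID [set M : {set 'I_n} | z \in M] (missing_fam F P)).
have -> : missing_fam F P :&: [set M : {set 'I_n} | z \in M] = [set M in missing_fam F P | z \in M].
  by apply/setP => M; rewrite !inE.
rewrite /mx.
suff h : #|missing_fam F P :\: [set M : {set 'I_n} | z \in M]| <= #|[set M in missing_fam F P | z \in M]|.
  by rewrite mul2n -addnn leq_add2l.
rewrite -(card_in_imset (f := fun M => z |: M)); last first.
  move=> M1 M2; rewrite !inE => /andP[h1 _] /andP[h2 _] E.
  by rewrite -(setU1K h1) -(setU1K h2) E.
apply: subset_leq_card; apply/subsetP => M' /imsetP[M] /setDP[hM]; rewrite inE => zM ->.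
rewrite inE setU11 andbT; apply: (upclosed hF hM); first exact: subsetUr.
rewrite subUset sub1set zP; move: hM; rewrite !inE ?powersetE; by case/andP.
Qed.

Lemma codim n (F : {set {set 'I_n}}) (P : {set 'I_n}) (M : {set 'I_n}) : hereditary F ->
  M \in missing_fam F P -> 2 ^ #|P :\: M| <= #|missing_fam F P|.
Proof.
move=> hF hM.
have sMP : M \subset P by move: hM => /setDP[]; rewrite powersetE.
rewrite cardsD (setIidPr sMP) -(interval_card sMP); apply: subset_leq_card.
apply/subsetP => R; rewrite inE => /andP[h1 h2]; exact: upclosed hF hM h1 h2.
Qed.

Lemma sum_sub (T : finType) (A B : {set T}) (f : T -> rat) : A \subset B ->
  (forall x, x \in B -> (0 <= f x)%R) -> (\sum_(x in A) f x <= \sum_(x in B) f x)%R.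
Proof.
move=> sAB f0; rewrite [X in (_ <= X)%R](big_setID A) /= (setIidPr sAB) lerDl.
by apply: sumr_ge0 => x /setDP[xB _]; exact: f0.
Qed.

Lemma inv_ge0 (k : nat) : (0 <= (k%:R : rat)^-1)%R.
Proof. by rewrite invr_ge0 ler0n. Qed.

Lemma w_split n (F : {set {set 'I_n}}) (P : {set 'I_n}) x :
  weightF F x = (\sum_(S in [set S in subfam F P | x \in S]) (#|S|%:R)^-1 + ex F P x)%R.
Proof.
rewrite /weightF /ex /Ox.
rewrite (eq_bigl (fun S => S \in [set S in F | x \in S])); last by move=> S; rewrite inE.
rewrite (big_setID (powerset P)) /=; congr (_ + _)%R.
apply: eq_bigl => S; rewrite !inE ?powersetE;
  by case: (S \in F); case: (x \in S); case: (S \subset P).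
Qed.

Lemma sum_a n (F : {set {set 'I_n}}) (P : {set 'I_n}) :
  ((#|subfam F P :\ set0|)%:R <=
   \sum_(x in P) \sum_(S in [set S in subfam F P | x \in S]) (#|S|%:R : rat)^-1)%R.
Proof.
rewrite (eq_bigr (fun x => \sum_(S in subfam F P | x \in S) (#|S|%:R : rat)^-1)%R); last first.
  by move=> x _; apply: eq_bigl => S; rewrite inE.
rewrite (exchange_big_dep (mem (subfam F P))) /=; last by move=> ? ? _ /andP[].
rewrite (eq_bigr (fun S => if S == set0 then 0 else 1)%R); last first.
  move=> S hS.
  rewrite (eq_bigl (fun x => x \in S)); last first.
    move=> x; rewrite hS andTb; case xS: (x \in S); rewrite ?andbF //.
    move: hS; rewrite inE => /andP[_ /subsetP sSP]; by rewrite sSP.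
  rewrite sumr_const; case: eqP => [->|hS0]; first by rewrite cards0 mulr0n.
  rewrite -(mulr_natr (#|S|%:R^-1)%R) mulVf // pnatr_eq0 -lt0n card_gt0; exact/eqP.
rewrite (big_setID [set set0]) /= -[X in (X <= _)%R]add0r; apply: lerD.
  by apply: sumr_ge0 => S _; case: eqP.
rewrite (eq_bigr (fun _ => 1%R)); last by move=> S /setDP[_]; rewrite inE => /negbTE ->.
by rewrite sumr_const.
Qed.

Lemma e_ge0 n (F : {set {set 'I_n}}) (P : {set 'I_n}) x : (0 <= ex F P x)%R.
Proof. by apply: sumr_ge0 => S _; exact: inv_ge0. Qed.

Lemma inv_le (a b : nat) : 0 < a -> a <= b -> ((b%:R : rat)^-1 <= (a%:R : rat)^-1)%R.
Proof.
move=> a0 ab; rewrite lef_pV2 ?ler_nat // posrE ltr0n //; exact: leq_trans ab.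
Qed.

Lemma Ox_mem n (F : {set {set 'I_n}}) (P : {set 'I_n}) x (S : {set 'I_n}) :
  S \in Ox F P x = [&& S \in F, x \in S & ~~ (S \subset P)].
Proof.
rewrite !inE ?powersetE; by case: (S \in F); case: (x \in S); case: (S \subset P).
Qed.

Lemma e_good n (F : {set {set 'I_n}}) (P : {set 'I_n}) d x :
  hereditary F -> x \in P -> #|P| = d -> good_v F d x -> ((2%:R)^-1 <= ex F P x)%R.
Proof.
move=> hF xP hP hg.
case: (set_0Vmem (Ox F P x)) => [E0 | [S hS]].
  have : nbhd F x \subset P.
    apply/bigcupsP => S /andP[SF xS]; apply/negPn/negP => nS.
    have : S \in Ox F P x by rewrite Ox_mem SF xS nS.
    by rewrite E0 inE.
  move/subset_leq_card; rewrite hP; move: hg; rewrite /good_v; lia.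
move: (hS); rewrite Ox_mem => /and3P[SF xS /subsetPn[y yS yP]].
set T := [set x; y].
have xy : x != y by apply: contraNN yP => /eqP <-.
have hT : T \in Ox F P x.
  rewrite Ox_mem !inE eqxx /=; apply/andP; split.
    apply: hF SF _; apply/subsetP => z; rewrite !inE => /orP[] /eqP ->//.
  apply/subsetPn; exists y => //; by rewrite !inE eqxx orbT.
rewrite /ex (bigD1 T) //= cards2 xy -[X in (X <= _)%R]addr0 lerD //.
by apply: sumr_ge0 => S' _; exact: inv_ge0.
Qed.

Lemma o_le n (F : {set {set 'I_n}}) (P : {set 'I_n}) x L :
  (forall S, S \in Ox F P x -> #|S| <= L) -> ((#|Ox F P x|)%:R <= L%:R * ex F P x)%R.
Proof.
move=> hL; rewrite /ex mulr_sumr -sum1_card natr_sum; apply: ler_sum => S hS.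
have s0 : 0 < #|S| by rewrite card_gt0; apply/set0Pn; move: hS; rewrite Ox_mem => /and3P[_ xS _]; exists x.
rewrite -[(L%:R * _)%R]/(L%:R / #|S|%:R)%R ler_pdivlMr ?ltr0n // mul1r ler_nat.
exact: hL.
Qed.

Lemma e_big n (F : {set {set 'I_n}}) (P : {set 'I_n}) x (S : {set 'I_n}) k :
  hereditary F -> S \in Ox F P x -> k.+2 <= #|S| ->
  ((2 ^ k)%:R / (k.+2)%:R <= ex F P x)%R.
Proof.
move=> hF hS hk.
move: (hS); rewrite Ox_mem => /and3P[SF xS /subsetPn[y yS yP]].
set A := [set x; y].
have hA : #|A| <= 2 by rewrite cards2; case: (x != y).
have sAS : A \subset S by apply/subsetP => z; rewrite !inE => /orP[] /eqP ->.
have [R [sAR sRS cR]] := exists_mid sAS (k := k.+2) ltac:(apply/andP; split; [exact: leq_trans hA _ | exact: hk]).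
set Phi := [set R' : {set 'I_n} | (A \subset R') && (R' \subset R)].
have cPhi : 2 ^ k <= #|Phi|.
  rewrite (interval_card sAR) cR leq_exp2l //; lia.
have sPhi : Phi \subset Ox F P x.
  apply/subsetP => R'; rewrite inE => /andP[sAR' sR'R]; rewrite Ox_mem.
  apply/and3P; split.
  - apply: hF SF _; exact: subset_trans sR'R sRS.
  - by apply: (subsetP sAR'); rewrite !inE eqxx.
  - apply/subsetPn; exists y => //; apply: (subsetP sAR'); by rewrite !inE eqxx orbT.
rewrite /ex; apply: le_trans (sum_sub (f := fun R0 : {set 'I_n} => ((#|R0|%:R : rat)^-1)%R) sPhi _); last by move=> ? _; exact: inv_ge0.
apply: le_trans (_ : ((#|Phi|)%:R / (k.+2)%:R <= _)%R).
  by rewrite ler_pM2r ?invr_gt0 ?ltr0n // ler_nat.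
rewrite -sum1_card natr_sum mulr_suml; apply: ler_sum => R'; rewrite inE => /andP[sAR' sR'R].
rewrite mul1r; apply: inv_le.
  rewrite card_gt0; apply/set0Pn; exists x; apply: (subsetP sAR'); by rewrite !inE eqxx.
by rewrite -cR subset_leq_card.
Qed.

Lemma notin_card n (F : {set {set 'I_n}}) (P : {set 'I_n}) x :
  #|missing_fam F P| - mx F P x = #|[set M in missing_fam F P | x \notin M]|.
Proof.
rewrite /mx -(cardsID [set M : {set 'I_n} | x \in M] (missing_fam F P)).
have -> : missing_fam F P :&: [set M : {set 'I_n} | x \in M] = [set M in missing_fam F P | x \in M].
  by apply/setP => M; rewrite !inE.
have -> : missing_fam F P :\: [set M : {set 'I_n} | x \in M] = [set M in missing_fam F P | x \notin M].
  by apply/setP => M; rewrite !inE andbC.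
by rewrite addKn.
Qed.

Lemma dcount (T : finType) (P : {set T}) (Mis : {set {set T}}) :
  \sum_(x in P) #|[set M in Mis | x \notin M]| = \sum_(M in Mis) #|P :\: M|.
Proof.
have E1 : forall x, #|[set M in Mis | x \notin M]| = \sum_(M in Mis) (x \notin M : nat).
  move=> x; rewrite -sum1_card (eq_bigl (fun M => (M \in Mis) && (x \notin M))); last first.
    by move=> M; rewrite inE.
  by rewrite big_mkcondr /=; apply: eq_bigr => M _; case: (x \notin M).
have E2 : forall M : {set T}, #|P :\: M| = \sum_(x in P) (x \notin M : nat).
  move=> M; rewrite -sum1_card (eq_bigl (fun x => (x \in P) && (x \notin M))); last first.
    by move=> x; rewrite inE andbC.
  by rewrite big_mkcondr /=; apply: eq_bigr => x _; case: (x \notin M).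
rewrite (eq_bigr _ (fun x _ => E1 x)) exchange_big /=.
by apply: eq_bigr => M _; rewrite E2.
Qed.

Lemma pow_bound T : 6 <= T -> 7 * T + 9 <= 2 ^ T.
Proof.
elim: T => // T IH; rewrite leq_eqVlt => /orP[/eqP <- // | h].
rewrite expnS; have := IH h; lia.
Qed.

Lemma pow2 J : 2 <= J -> 2 * J + 3 <= 2 ^ J.+1.
Proof.
elim: J => // J IH; rewrite leq_eqVlt => /orP[/eqP <- // | h].
rewrite expnS; have := IH h; lia.
Qed.

Lemma exJ d : 50 <= d -> exists J, [/\ d <= 2 ^ J, 7 * J + 2 <= d & 2 <= J].
Proof.
move=> hd.
have := @trunc_log_bounds 2 d isT ltac:(lia).
set T := trunc_log 2 d => /andP[h1 h2].
exists T.+1; split.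
- exact: ltnW.
- case: (leqP 6 T) => hT.
    have := pow_bound hT; lia.
  lia.
- case: T h1 h2 => [|[|T]] h1 h2 //=; rewrite ?expn0 ?expn1 in h2; lia.
Qed.

Lemma big2 d : 50 <= d -> 2 * d <= 2 ^ d.-1.
Proof.
move=> hd; have -> : d.-1 = (d - 3).+2 by lia.
have := ltn_expl (d - 3) (isT : 1 < 2); rewrite !expnS; lia.
Qed.

Theorem mainTheorem16 (n d c : nat) (F : {set {set 'I_n}}) (P : {set 'I_n}) :
  50 <= d -> 1 <= c <= d ->
  hereditary F ->
  min_deg_ge F (2 ^ d.-1 - c + 1) ->
  isolated_pile F d P ->
  (\sum_(x in P) weightF F x < (2 ^ d - c)%:R)%R ->
  [/\ c <= t_of F d P,
      t_of F d P <= 2 * c - 2,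
      (forall x, x \in P -> 2 ^ d.-1 - 2 * c + 2 <= degF (subfam F P) x),
      (forall x, x \in P -> bad_v F d x -> [set x] \in compl_missing F P)
    & ((#|[set x in P | good_v F d x]|%:R : rat) <= d%:R / 2 - 1)%R].
Proof.
move=> hd /andP[c1 cd] hF hdeg [[hP [hsub [z zP hz]]] _] hW.
have tM : #|missing_fam F P| = t_of F d P := miss_card F hP.
have hGle := subfam_le F P; rewrite hP in hGle.
have hd2 := big2 hd.
have c2 : c <= 2 ^ d.-1 by lia.
have hx : forall x, x \in P -> mx F P x + 1 <= #|Ox F P x| + c.
  move=> x xP; have := hdeg x; rewrite (deg_split F P x).
  have := count_x F xP; rewrite hP subn1; lia.
have mxt : forall x, mx F P x <= t_of F d P.
  move=> x; rewrite -tM /mx; apply: subset_leq_card; apply/subsetP => M; rewrite inE; by case/andP.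
set G := subfam F P.
set E := (\sum_(x in P) ex F P x)%R.
have E0 : (0 <= E)%R by apply: sumr_ge0 => x _; exact: e_ge0.
have hW2 : ((#|G :\ set0|)%:R + E < (2 ^ d - c)%:R)%R.
  apply: le_lt_trans hW.
  rewrite (eq_bigr _ (fun x _ => w_split F P x)) big_split /= lerD2r.
  exact: sum_a.
have hG1 : #|G| <= 1 + #|G :\ set0| by rewrite (cardsD1 set0 G); case: (set0 \in G).
have hGc : #|G :\ set0| < 2 ^ d - c.
  rewrite -(ltr_nat rat); apply: le_lt_trans hW2; by rewrite lerDl.
have ta : c <= t_of F d P by rewrite /t_of -/G; lia.
have Oz : Ox F P z = set0 := Ox_nb hz.
have tb : t_of F d P <= 2 * c - 2.
  have := hx z zP; rewrite Oz cards0 add0n => h1.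
  have := t2m hF zP; rewrite tM; lia.
split => //.
- move=> x xP; have := count_x F xP; rewrite hP subn1 /G => h.
  have := mxt x; lia.
- move=> x xP hbad.
  have nx : nbhd F x = P.
    apply/eqP; rewrite eq_sym eqEcard hsub //=; move: hbad; rewrite /bad_v hP => /eqP ->; done.
  have := hx x xP; rewrite (Ox_nb nx) cards0 add0n => h1.
  have nPx : (P :\ x) \notin F.
    apply/negP => hPx.
    suff : t_of F d P <= mx F P x by lia.
    rewrite -tM /mx; apply: subset_leq_card; apply/subsetP => M hM; rewrite inE hM /=.
    apply/negPn/negP => xM; move: (hM); rewrite !inE ?powersetE => /andP[/negP hMF sMP].
    apply: hMF; rewrite sMP andbT; apply: hF hPx _.
    by apply/subsetP => y yM; rewrite !inE (subsetP sMP) // andbT; apply: contraNN xM => /eqP <-.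
  apply/imsetP; exists (P :\ x).
    by rewrite !inE ?powersetE subsetDl andbT (negbTE nPx).
  apply/setP => y; rewrite !inE; case: (eqVneq y x) => [->|]; rewrite ?xP //=; by case: (y \in P).
set g := #|[set x in P | good_v F d x]|.
suff hg : (g.+1).*2 <= d.
  rewrite lerBrDr ler_pdivlMr // -(natrD rat g 1) -natrM ler_nat; lia.
rewrite leqNgt; apply/negP => hgd.
set t := t_of F d P in ta tb mxt tM hW2 *.
set K := t + 1 - c.
have EK : (E < K%:R)%R.
  have h1 : 2 ^ d - c <= K + #|G :\ set0| by rewrite /K /t /t_of -/G; lia.
  rewrite -(ler_nat rat) natrD in h1.
  have := lt_le_trans hW2 h1; rewrite addrC ltrD2r //.
have gK : g < K.*2.
  have h1 : (g%:R / 2%:R <= E)%R.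
    have sg : [set x in P | good_v F d x] \subset P by apply/subsetP => x; rewrite inE => /andP[].
    apply: le_trans (sum_sub (f := ex F P) sg (fun x _ => e_ge0 F P x)).
    rewrite /g -sum1_card natr_sum mulr_suml; apply: ler_sum => x; rewrite inE => /andP[xP gx].
    by rewrite mul1r; apply: (e_good hF xP hP gx).
  have := le_lt_trans h1 EK; rewrite ltr_pdivrMr // -natrM ltr_nat; lia.
have [J [dJ Jd J2]] := exJ hd.
set L := (2 * J + 2).
have hLd : d * (2 * J + 3) <= 2 ^ (2 * J + 1).
  have := pow2 J2; have -> : 2 ^ (2 * J + 1) = 2 ^ J * 2 ^ J.+1 by rewrite -expnD; congr (_ ^ _); lia.
  move=> h; apply: leq_mul => //.
have Kd : K < d by rewrite /K; lia.
have hsz : forall x S, x \in P -> S \in Ox F P x -> #|S| <= L.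
  move=> x S xP hS; rewrite leqNgt; apply/negP => hS2.
  have := e_big (k := (2 * J + 1)) hF hS ltac:(rewrite /L in hS2; lia).
  have exE : (ex F P x <= E)%R.
    have sx : [set x] \subset P by rewrite sub1set.
    have := sum_sub (f := ex F P) sx (fun x _ => e_ge0 F P x); by rewrite big_set1.
  move=> h2.
  have : ((2 ^ (2 * J + 1))%:R / (2 * J + 1).+2%:R < (d%:R : rat))%R.
    apply: le_lt_trans h2 _; apply: le_lt_trans exE _; apply: lt_trans EK _; by rewrite ltr_nat.
  rewrite ltr_pdivrMr // -natrM ltr_nat; have -> : (2 * J + 1).+2 = 2 * J + 3 by lia.
  lia.
have So : \sum_(x in P) #|Ox F P x| < L * K.
  rewrite -(ltr_nat rat) natr_sum natrM.
  apply: (le_lt_trans (y := (L%:R * E)%R)).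
    rewrite /E mulr_sumr; apply: ler_sum => x xP; apply: o_le => S; exact: hsz.
  by rewrite ltr_pM2l // ltr0n /L addn2.
have Sm : \sum_(x in P) (t - mx F P x) <= t * J.
  rewrite (eq_bigr _ (fun x _ => etrans (congr1 (fun u => u - mx F P x) (esym tM)) (notin_card F P x))).
  rewrite dcount -[t in t * J]tM -sum1_card big_distrl /=.
  apply: leq_sum => M hM; rewrite mul1n.
  have := codim hF hM; rewrite tM => h.
  have : 2 ^ #|P :\: M| < 2 ^ J.+1 by rewrite expnS; lia.
  by rewrite ltn_exp2l.
have SK : d * K <= \sum_(x in P) ((t - mx F P x) + #|Ox F P x|).
  rewrite -hP -sum_nat_const; apply: leq_sum => x xP; have := hx x xP; rewrite /K; lia.
rewrite big_split /= in SK.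
have h := leq_trans SK (leq_add Sm (ltnW So)).
have tK : t + 1 = K + c by rewrite /K; lia.
have dK : d <= 4 * K - 1 by move: hgd gK; rewrite -!muln2; lia.
have td : t <= d + K - 1 by lia.
rewrite /L in h.
have h2 : t * J <= (d + K - 1) * J by apply: leq_mul.
have h3 : (d + K - 1) * J <= (5 * K - 2) * J by apply: leq_mul => //; lia.
have h4 : K * (7 * J + 2) <= K * d by apply: leq_mul.
have e1 : (5 * K - 2) * J = 5 * (K * J) - 2 * J by rewrite mulnBl mulnA.
have e2 : (2 * J + 2) * K = 2 * (K * J) + 2 * K by lia.
have e3 : K * (7 * J + 2) = 7 * (K * J) + 2 * K by lia.
have e4 : d * K = K * d by rewrite mulnC.
rewrite e2 e4 in h; rewrite e1 in h3; rewrite e3 in h4.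
have KJ : 2 * J <= 5 * (K * J).
  have : J <= K * J by rewrite leq_pmull //; lia.
  lia.
lia.
Qed.
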